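(* Let $F$ be an unsatisfiable CNF formula not containing the variables $x$ and $y$, and let $f^x_y(F) = \{x,\ \neg x \vee y\} \cup \{\neg y \vee \delta \mid \delta \in F\}$. Then every minimum-size regular resolution proof of $f^x_y(F)$ contains exactly one resolution step on $x$, and this step can be pushed to the leaf level, i.e., the proof can be transformed, without changing its size, into a regular resolution proof of $f^x_y(F)$ in which the resolution on $x$ is the resolution of the two leaf clauses $x$ and $\neg x \vee y$.
   Context: The resolution rule derives from clauses $\alpha \vee z$ and $\beta \vee \neg z$ the resolvent $\alpha \vee \beta$ (resolving on $z$). A resolution proof of a CNF formula $F$ is a directed acyclic graph whose nodes are clauses, whose leaves are clauses of $F$, in which each internal node is the resolvent of its two parents, and whose root is the empty clause. It is regular if no path from the root to a leaf contains two resolution steps on the same variable. The size of a proof is its number of clauses (nodes); an optimal proof is one of minimum size. *)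

(* Defs.v *)
From HB Require Import structures.
From mathcomp Require Import all_boot all_order finmap.
Set Implicit Arguments. Unset Strict Implicit. Unset Printing Implicit Defensive.
Local Open Scope fset_scope.

(* A literal is a pair (variable, polarity): (v, true) = v, (v, false) = ~v. *)
Definition lit := (nat * bool)%type.
Definition clause := {fset lit}.
Definition cnf := seq clause.

Definition sat_clause (a : nat -> bool) (c : clause) : bool :=
  [exists l : c, a (val l).1 == (val l).2].
Definition satisfiable (F : cnf) : Prop :=
  exists a : nat -> bool, all (sat_clause a) F.
Definition unsatisfiable (F : cnf) : Prop := ~ satisfiable F.

Definition mentions (F : cnf) (v : nat) : bool :=
  has (fun c : clause => [exists l : c, (val l).1 == v]) F.

Definition fxy (x y : nat) (F : cnf) : cnf :=
  [fset (x, true)] :: [fset (x, false); (y, true)]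
    :: [seq (y, false) |` d | d <- F].

(* A resolution proof is a DAG given in topological order: a list of nodes,
   each labelled by a clause and either a leaf (Leaf) or a resolution step
   Resolve i j z whose parents are the earlier nodes i and j, where node i
   contains z and node j contains ~z. *)
Inductive step := Leaf | Resolve of nat & nat & nat.
Record node := Node { ncl : clause; nstep : step }.
Definition dnode : node := Node fset0 Leaf.

Definition proof := seq node.

Definition cl_at (P : proof) (k : nat) : clause := ncl (nth dnode P k).
Definition step_at (P : proof) (k : nat) : step := nstep (nth dnode P k).

Definition node_ok (F : cnf) (P : proof) (k : nat) : Prop :=
  match step_at P k with
  | Leaf => cl_at P k \in F
  | Resolve i j z =>
      [/\ i < k, j < k, i != j,
          ((z, true) \in cl_at P i /\ (z, false) \in cl_at P j) &
          cl_at P k = (cl_at P i `\ (z, true)) `|` (cl_at P j `\ (z, false))]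
  end.

Definition root (P : proof) : nat := (size P).-1.

Definition is_proof (F : cnf) (P : proof) : Prop :=
  [/\ 0 < size P, (forall k, k < size P -> node_ok F P k) &
      cl_at P (root P) = fset0].

Definition parent (P : proof) : rel nat := fun k m =>
  if step_at P k is Resolve i j _ then (m == i) || (m == j) else false.

Definition is_leaf (P : proof) (k : nat) : bool :=
  if step_at P k is Leaf then true else false.

Definition pivot (P : proof) (k : nat) : option nat :=
  if step_at P k is Resolve _ _ z then Some z else None.

Definition path_pivots (P : proof) (q : seq nat) : seq nat :=
  pmap (pivot P) q.

Definition regular (P : proof) : Prop :=
  forall p : seq nat, path (parent P) (root P) p ->
    is_leaf P (last (root P) p) -> uniq (path_pivots P (root P :: p)).

Definition is_reg_proof (F : cnf) (P : proof) : Prop := is_proof F P /\ regular P.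

Definition is_min_reg_proof (F : cnf) (P : proof) : Prop :=
  is_reg_proof F P /\ forall Q, is_reg_proof F Q -> size P <= size Q.

Definition nres_on (P : proof) (v : nat) : nat :=
  count (fun k => pivot P k == Some v) (iota 0 (size P)).

(* Main.v *)
Require Import Defs.
From mathcomp Require Import all_boot all_order finmap.
From mathcomp Require Import zify.
Set Implicit Arguments. Unset Strict Implicit. Unset Printing Implicit Defensive.
Local Open Scope fset_scope.
Local Open Scope nat_scope.

Inductive status := Del | At of nat.

Definition sat2 x y (C : clause) := ((x,true) \in C) || ((y,true) \in C).
Definition restr x y (C : clause) : clause := C `\` [fset (x,false); (y,false)].

Definition stepf x y (k : nat) (C : clause) (s : step) (stf : nat -> status)
   (clf : nat -> clause) (sz : nat) : status * option node :=
  match s with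
  | Leaf => if sat2 x y C then (Del, None)
            else (At sz, Some (Node (restr x y C) Leaf))
  | Resolve i j z =>
    if (i < k) && (j < k) then
     if (z == x) || (z == y) then (stf j, None) else
     match stf i, stf j with
     | At a1, At a2 =>
        if (a1 < sz) && (a2 < sz) then
        if a1 == a2 then (At a1, None)
        else if (z,true) \notin clf a1 then (At a1, None)
        else if (z,false) \notin clf a2 then (At a2, None)
        else (At sz, Some (Node ((clf a1 `\ (z,true)) `|` (clf a2 `\ (z,false))) (Resolve a1 a2 z)))
        else (Del, None)
     | _, _ => (Del, None)
     end
    else (Del, None)
  end.

Lemma stepf_ext x y k C s stf1 stf2 clf1 clf2 sz :
  (forall i, i < k -> stf1 i = stf2 i) -> (forall a, a < sz -> clf1 a = clf2 a) ->
  stepf x y k C s stf1 clf1 sz = stepf x y k C s stf2 clf2 sz.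
Proof.
move=> Hs Hc; rewrite /stepf; case: s => // i j z.
case: ifP => // /andP[ik jk]; rewrite !Hs //.
case: ifP => // _; case: (stf2 i) => // a1; case: (stf2 j) => // a2.
by case: ifP => // /andP[a1s a2s]; rewrite !Hc.
Qed.

Definition oseq (o : option node) := if o is Some nd then [:: nd] else [::].

Fixpoint go x y (P : proof) (k : nat) : seq status * seq node :=
  if k is k'.+1 then
    let p := go x y P k' in
    let r := stepf x y k' (cl_at P k') (step_at P k') (nth Del p.1) (cl_at p.2) (size p.2) in
    (rcons p.1 r.1, p.2 ++ oseq r.2)
  else ([::], [::]).

Lemma go_size x y P k : size (go x y P k).1 = k.
Proof. by elim: k => //= k IH; rewrite size_rcons IH. Qed.

Lemma go_prefix x y P k d : exists s1 s2,
  (go x y P (k + d)).1 = (go x y P k).1 ++ s1 /\ (go x y P (k + d)).2 = (go x y P k).2 ++ s2.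
Proof.
elim: d => [|d [s1 [s2 [h1 h2]]]]; first by exists [::], [::]; rewrite addn0 !cats0.
exists (rcons s1 (stepf x y (k + d) (cl_at P (k + d)) (step_at P (k + d))
     (nth Del (go x y P (k + d)).1) (cl_at (go x y P (k + d)).2) (size (go x y P (k + d)).2)).1).
exists (s2 ++ oseq (stepf x y (k + d) (cl_at P (k + d)) (step_at P (k + d))
     (nth Del (go x y P (k + d)).1) (cl_at (go x y P (k + d)).2) (size (go x y P (k + d)).2)).2).
by rewrite addnS /= h1 h2 rcons_cat catA.
Qed.

Definition ST x y P := (go x y P (size P)).1.
Definition OUT x y P := (go x y P (size P)).2.
Definition ee x y P k := size (go x y P k).2.
Definition stat x y P k := nth Del (ST x y P) k.
Definition D x y P a := cl_at (OUT x y P) a.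
Definition stepR x y P k :=
  stepf x y k (cl_at P k) (step_at P k) (stat x y P) (D x y P) (ee x y P k).

Lemma ee_mono x y P k k' : k <= k' -> ee x y P k <= ee x y P k'.
Proof.
move/subnKC <-; have [s1 [s2 [_ h]]] := go_prefix x y P k (k' - k).
by rewrite /ee h size_cat leq_addr.
Qed.

Lemma stat_prefix x y P k i : k <= size P -> i < k -> nth Del (go x y P k).1 i = stat x y P i.
Proof.
move=> kP ik; rewrite /stat /ST -(subnKC kP).
have [s1 [s2 [-> _]]] := go_prefix x y P k (size P - k).
by rewrite nth_cat go_size ik.
Qed.

Lemma D_prefix x y P k a : k <= size P -> a < ee x y P k -> cl_at (go x y P k).2 a = D x y P a.
Proof.
move=> kP ak; rewrite /D /OUT /cl_at -(subnKC kP).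
have [s1 [s2 [_ ->]]] := go_prefix x y P k (size P - k).
by move: ak; rewrite /ee nth_cat => ->.
Qed.

Lemma go_step x y P k : k < size P ->
  [/\ stat x y P k = (stepR x y P k).1,
      (go x y P k.+1).2 = (go x y P k).2 ++ oseq (stepR x y P k).2 &
      ee x y P (k.+1) = ee x y P k + size (oseq (stepR x y P k).2)].
Proof.
move=> kP.
have E : stepf x y k (cl_at P k) (step_at P k) (nth Del (go x y P k).1) (cl_at (go x y P k).2)
        (size (go x y P k).2) = stepR x y P k.
  apply: stepf_ext => [i ik|a ak]; first by apply: stat_prefix => //; lia.
  by apply: D_prefix => //; lia.
have h2 : (go x y P k.+1).2 = (go x y P k).2 ++ oseq (stepR x y P k).2 by rewrite /= E.
split => //; last by rewrite /ee h2 size_cat.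
rewrite -(@stat_prefix x y P k.+1 k kP (ltnSn k)) /= E.
by rewrite nth_rcons go_size ltnn eqxx.
Qed.

Lemma ee_last x y P : ee x y P (size P) = size (OUT x y P).
Proof. by []. Qed.

Lemma out_at x y P k nd : k < size P -> (stepR x y P k).2 = Some nd ->
  nth dnode (OUT x y P) (ee x y P k) = nd.
Proof.
move=> kP E; have [_ h2 _] := @go_step x y P k kP.
rewrite /OUT -(subnKC kP).
have [s1 [s2 [_ ->]]] := go_prefix x y P k.+1 (size P - k.+1).
by rewrite h2 E /= -catA nth_cat /ee ltnn subnn.
Qed.

Inductive stat_spec x y P k : status -> option node -> Prop :=
| SLeafDel : step_at P k = Leaf -> sat2 x y (cl_at P k) -> stat_spec x y P k Del None
| SLeafAt : step_at P k = Leaf -> ~~ sat2 x y (cl_at P k) ->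
    stat_spec x y P k (At (ee x y P k)) (Some (Node (restr x y (cl_at P k)) Leaf))
| SGuard i j z : step_at P k = Resolve i j z -> ~~ ((i < k) && (j < k)) -> stat_spec x y P k Del None
| SXY i j z : step_at P k = Resolve i j z -> i < k -> j < k -> (z == x) || (z == y) ->
    stat_spec x y P k (stat x y P j) None
| SDel i j z : step_at P k = Resolve i j z -> i < k -> j < k -> ~~ ((z == x) || (z == y)) ->
    (stat x y P i = Del \/ stat x y P j = Del) -> stat_spec x y P k Del None
| SRange i j z a1 a2 : step_at P k = Resolve i j z -> i < k -> j < k ->
    stat x y P i = At a1 -> stat x y P j = At a2 ->
    ~~ ((a1 < ee x y P k) && (a2 < ee x y P k)) -> stat_spec x y P k Del None
| SAl i j z a1 a2 b : step_at P k = Resolve i j z -> i < k -> j < k -> ~~ ((z == x) || (z == y)) ->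
    stat x y P i = At a1 -> stat x y P j = At a2 -> a1 < ee x y P k -> a2 < ee x y P k ->
    (b = a1 /\ ((a1 == a2) || ((z,true) \notin D x y P a1))) \/
    (b = a2 /\ (z,true) \in D x y P a1 /\ (z,false) \notin D x y P a2) ->
    stat_spec x y P k (At b) None
| SEmit i j z a1 a2 : step_at P k = Resolve i j z -> i < k -> j < k -> ~~ ((z == x) || (z == y)) ->
    stat x y P i = At a1 -> stat x y P j = At a2 -> a1 < ee x y P k -> a2 < ee x y P k ->
    a1 != a2 -> (z,true) \in D x y P a1 -> (z,false) \in D x y P a2 ->
    stat_spec x y P k (At (ee x y P k))
      (Some (Node ((D x y P a1 `\ (z,true)) `|` (D x y P a2 `\ (z,false))) (Resolve a1 a2 z))).

Lemma specP x y P k : k < size P -> stat_spec x y P k (stat x y P k) (stepR x y P k).2.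
Proof.
move=> kP; have [-> _ _] := @go_step x y P k kP.
rewrite /stepR /stepf; case E: (step_at P k) => [|i j z].
  by case: ifP => h; [simpl; apply: SLeafDel | simpl; apply: SLeafAt => //; rewrite h].
case: ifP => [/andP[ik jk]|g]; last by simpl; apply: (SGuard _ _ E); rewrite g.
case: ifP => zxy; first by simpl; exact: SXY E ik jk zxy.
have nzxy : ~~ ((z == x) || (z == y)) by rewrite zxy.
case Si: (stat x y P i) => [|a1]; first by simpl; apply: (SDel E) => //; left.
case Sj: (stat x y P j) => [|a2]; first by simpl; apply: (SDel E) => //; right.
case: ifP => [/andP[a1s a2s]|g]; last by simpl; apply: (SRange E ik jk Si Sj); rewrite g.
case: ifP => e12; first by simpl; apply: (SAl E ik jk nzxy Si Sj a1s a2s); left; rewrite e12.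
case: ifP => h1; first by simpl; apply: (SAl E ik jk nzxy Si Sj a1s a2s); left; rewrite h1 orbT.
case: ifP => h2.
  by simpl; apply: (SAl E ik jk nzxy Si Sj a1s a2s); right; rewrite h2 (negbFE h1).
by simpl; apply: (SEmit E ik jk nzxy Si Sj a1s a2s); rewrite ?(negbT e12) ?(negbFE h1) ?(negbFE h2).
Qed.

Lemma inC_l (Ck Ci Cj : clause) z l : Ck = (Ci `\ (z,true)) `|` (Cj `\ (z,false)) ->
  l \in Ci -> l != (z,true) -> l \in Ck.
Proof. by move=> -> li lz; rewrite in_fsetU in_fsetD1 li lz. Qed.

Lemma inC_r (Ck Ci Cj : clause) z l : Ck = (Ci `\ (z,true)) `|` (Cj `\ (z,false)) ->
  l \in Cj -> l != (z,false) -> l \in Ck.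
Proof. by move=> -> lj lz; rewrite in_fsetU !in_fsetD1 lj lz orbT. Qed.

Lemma in_restr x y (C : clause) l :
  (l \in restr x y C) = (l \notin [fset (x,false); (y,false)]) && (l \in C).
Proof. by rewrite /restr in_fsetD. Qed.

Lemma out_D x y P k nd : k < size P -> (stepR x y P k).2 = Some nd ->
  D x y P (ee x y P k) = ncl nd /\ nth dnode (OUT x y P) (ee x y P k) = nd.
Proof. by move=> kP E; rewrite /D /cl_at (out_at kP E). Qed.

Lemma inv_stat G x y P : (forall k, k < size P -> node_ok G P k) ->
  forall k, k < size P ->
  (stat x y P k = Del -> sat2 x y (cl_at P k)) /\
  (forall a, stat x y P k = At a -> a < ee x y P k.+1 /\ {subset D x y P a <= restr x y (cl_at P k)}).
Proof.
move=> ok; elim/ltn_ind => k IH kP.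
have Hout := @out_D x y P k _ kP.
have [_ _ Esucc] := @go_step x y P k kP.
have okk := ok k kP; rewrite /node_ok in okk.
have mono := @ee_mono x y P.
move: Hout Esucc; case: (specP x y kP).
- by move=> _ s _ _; split.
- move=> E ns /(_ _ erefl) [/= DE _] ->; split => // a [<-]; split; first by rewrite /= addn1.
  by rewrite DE.
- by move=> i j z E; rewrite E in okk; case: okk => -> ->.
- move=> i j z E ik jk zxy _ _; rewrite E in okk; case: okk => _ _ _ _ Ck.
  have [IHd IHa] := IH j jk (ltn_trans jk kP).
  split.
    move/IHd; rewrite /sat2 => /orP[] h; apply/orP; [left|right]; apply: (inC_r Ck h);
      by rewrite xpair_eqE andbF.
  move=> a /IHa [aj sub]; split; first by apply: leq_trans aj _; apply: mono; lia.
  move=> l /sub; rewrite !in_restr => /andP[nl lj]; rewrite nl /=.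
  apply: (inC_r Ck lj); apply: contra nl => /eqP->.
  by case/orP: zxy => /eqP->; rewrite in_fset2 eqxx ?orbT.
- move=> i j z E ik jk zxy hd _ _; rewrite E in okk; case: okk => _ _ _ _ Ck.
  split => // _; case: hd => /(proj1 (IH _ _ _)) h.
  + have /h : i < size P by lia.
    move=> {}h; move: (ik) => /h; rewrite /sat2 => /orP[] h'; apply/orP; [left|right];
      apply: (inC_l Ck h'); rewrite xpair_eqE andbT; apply: contra zxy => /eqP->; by rewrite eqxx ?orbT.
  + have /h : j < size P by lia.
    move=> {}h; move: (jk) => /h; rewrite /sat2 => /orP[] h'; apply/orP; [left|right];
      apply: (inC_r Ck h'); by rewrite xpair_eqE andbF.
- move=> i j z a1 a2 E ik jk Si Sj; rewrite E in okk; case: okk => _ _ _ _ _.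
  have [_ /(_ _ Si) [a1i _]] := IH i ik (ltn_trans ik kP).
  have [_ /(_ _ Sj) [a2j _]] := IH j jk (ltn_trans jk kP).
  have m1 := mono i.+1 k ik; have m2 := mono j.+1 k jk.
  by rewrite (leq_trans a1i m1) (leq_trans a2j m2).
- move=> i j z a1 a2 b E ik jk zxy Si Sj a1s a2s hb _ _; rewrite E in okk.
  case: okk => _ _ _ _ Ck; split => // _ [<-].
  have [_ /(_ _ Si) [_ sub1]] := IH i ik (ltn_trans ik kP).
  have [_ /(_ _ Sj) [_ sub2]] := IH j jk (ltn_trans jk kP).
  have mk := mono k k.+1 (leqnSn k).
  case: hb => [[-> h]|[-> [_ h]]]; split; try by apply: leq_trans mk.
  + move=> l ld; have := sub1 _ ld; rewrite !in_restr => /andP[nl li]; rewrite nl /=.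
    case/orP: h => [/eqP e12|h].
      have := sub2 l; rewrite -e12 => /(_ ld); rewrite in_restr => /andP[_ lj].
      case: (eqVneq l (z,true)) => [el|nlz]; last exact: (inC_l Ck li nlz).
      by apply: (inC_r Ck lj); rewrite el xpair_eqE andbF.
    apply: (inC_l Ck li); by apply: contra h => /eqP <-.
  + move=> l ld; have := sub2 _ ld; rewrite !in_restr => /andP[nl lj]; rewrite nl /=.
    apply: (inC_r Ck lj); by apply: contra h => /eqP <-.
- move=> i j z a1 a2 E ik jk zxy Si Sj a1s a2s n12 h1 h2 /(_ _ erefl) [/= DE _] ->.
  rewrite E in okk; case: okk => _ _ _ _ Ck; split => // a [<-]; split; first by rewrite /= addn1.
  have [_ /(_ _ Si) [_ sub1]] := IH i ik (ltn_trans ik kP).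
  have [_ /(_ _ Sj) [_ sub2]] := IH j jk (ltn_trans jk kP).
  move=> l; rewrite DE in_fsetU !in_fsetD1 => /orP[/andP[lz ld]|/andP[lz ld]].
  + have := sub1 _ ld; rewrite !in_restr => /andP[nl li]; rewrite nl /=; exact: (inC_l Ck li lz).
  + have := sub2 _ ld; rewrite !in_restr => /andP[nl lj]; rewrite nl /=; exact: (inC_r Ck lj lz).
Qed.

Lemma mentionsP (F : cnf) v b (d : clause) : d \in F -> (v, b) \in d -> mentions F v.
Proof. move=> dF vd; apply/hasP; exists d => //; apply/existsP; by exists [` vd]. Qed.

Lemma in_fxy x y F (C : clause) : C \in fxy x y F ->
  [\/ C = [fset (x,true)], C = [fset (x,false); (y,true)] | exists2 d, d \in F & C = (y,false) |` d].
Proof.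
rewrite /fxy !in_cons => /or3P [/eqP->|/eqP->|/mapP[d dF ->]];
  [by constructor 1|by constructor 2|constructor 3; by exists d].
Qed.

Lemma restr_in_F x y F (C : clause) : ~~ mentions F x -> ~~ mentions F y ->
  C \in fxy x y F -> ~~ sat2 x y C -> restr x y C \in F.
Proof.
move=> mx my /in_fxy [->|->|[d dF ->]].
- by rewrite /sat2 in_fset1 !eqxx.
- by rewrite /sat2 !in_fset2 !xpair_eqE !eqxx ?orbT ?andbT.

move=> _; have -> // : restr x y ((y, false) |` d) = d.
apply/fsetP => l; rewrite in_restr in_fset1U ?in_fset2 ?in_fsetU ?in_fset1.
case: (eqVneq l (y,false)) => [->|ny]; rewrite ?eqxx ?orbT /=.
  by apply/esym/negP => /(mentionsP dF); apply/negP.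
case: (eqVneq l (x,false)) => [->|nx] /=.
  by apply/esym/negP => /(mentionsP dF); apply/negP.
by [].
Qed.

Lemma out_ok F x y P : ~~ mentions F x -> ~~ mentions F y ->
  (forall k, k < size P -> node_ok (fxy x y F) P k) ->
  forall a, a < size (OUT x y P) ->
  node_ok F (OUT x y P) a /\
  (forall i j z, step_at (OUT x y P) a = Resolve i j z -> (z != x) && (z != y)).
Proof.
move=> mx my ok.
suff H : forall k, k <= size P -> forall a, a < ee x y P k -> node_ok F (OUT x y P) a /\
  (forall i j z, step_at (OUT x y P) a = Resolve i j z -> (z != x) && (z != y)).
  by move=> a; rewrite -ee_last; apply: H.
elim=> [|k IH] kP a; first by rewrite /ee /=.
have kP' : k < size P by [].
have Hout := @out_D x y P k _ kP'.
have [_ _ Esucc] := @go_step x y P k kP'.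
have okk := ok k kP'; rewrite /node_ok in okk.
case: (ltnP a (ee x y P k)) => [lt|ge]; first by move=> _; apply: IH => //; lia.
move: Hout Esucc; case: (specP x y kP'); try by move=> *; simpl in *; lia.
- move=> E ns /(_ _ erefl) [/= DE NE] -> /= alt.
  have -> : a = ee x y P k by lia.
  rewrite /node_ok /step_at /cl_at NE /=; split => //.
  by apply: restr_in_F => //; rewrite E in okk.
- move=> i j z a1 a2 E ik jk zxy Si Sj a1s a2s n12 h1 h2 /(_ _ erefl) [/= DE NE] -> /= alt.
  have -> : a = ee x y P k by lia.
  rewrite /node_ok /step_at /cl_at NE /=; split; last first.
    by move=> ? ? ? [_ _ <-]; move: zxy; rewrite negb_or.
  by split => //.
Qed.

Lemma pp_cons (Q : proof) k p : path_pivots Q (k :: p) =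
  (if pivot Q k is Some z then z :: path_pivots Q p else path_pivots Q p).
Proof. by rewrite /path_pivots /=; case: (pivot Q k). Qed.

Lemma claimC G x y P : (forall k, k < size P -> node_ok G P k) ->
  forall k, k < size P -> forall a, stat x y P k = At a ->
  forall pR, path (parent (OUT x y P)) a pR -> is_leaf (OUT x y P) (last a pR) ->
  exists pP, [/\ path (parent P) k pP, is_leaf P (last k pP) &
     subseq (path_pivots (OUT x y P) (a :: pR)) (path_pivots P (k :: pP))].
Proof.
move=> ok; elim/ltn_ind => k IH kP.
have Hout := @out_D x y P k _ kP.
have okk := ok k kP; rewrite /node_ok in okk.
move: Hout; case: (specP x y kP) => //.
- move=> E ns /(_ _ erefl) [/= DE NE] a [<-] [|b pR].
    move=> _ _; exists [::]; split => //; first by rewrite /is_leaf E.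
    by rewrite /path_pivots /= /pivot /step_at NE /= sub0seq.
  by move=> /andP[]; rewrite /parent /step_at NE.
- move=> i j z E ik jk _ _ a Sj pR pa la.
  have [pP [p1 p2 p3]] := IH j jk (ltn_trans jk kP) a Sj pR pa la.
  exists (j :: pP); split => //; first by rewrite /= p1 /parent E eqxx orbT.
  rewrite (pp_cons P k) /pivot E; exact: subseq_trans p3 (subseq_cons _ _).
- move=> i j z a1 a2 b E ik jk _ Si Sj _ _ hb _ a [<-] pR pa la.
  case: hb => [[eb _]|[eb _]]; subst b.
    have [pP [p1 p2 p3]] := IH i ik (ltn_trans ik kP) a1 Si pR pa la.
    exists (i :: pP); split => //; first by rewrite /= p1 /parent E eqxx.
    rewrite (pp_cons P k) /pivot E; exact: subseq_trans p3 (subseq_cons _ _).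
  have [pP [p1 p2 p3]] := IH j jk (ltn_trans jk kP) a2 Sj pR pa la.
  exists (j :: pP); split => //; first by rewrite /= p1 /parent E eqxx orbT.
  rewrite (pp_cons P k) /pivot E; exact: subseq_trans p3 (subseq_cons _ _).
- move=> i j z a1 a2 E ik jk _ Si Sj _ _ _ _ _ /(_ _ erefl) [/= DE NE] a [<-] [|b pR].
    by move=> _; rewrite /is_leaf /step_at NE.
  move=> /andP[]; rewrite {1}/parent /step_at NE => /orP[/eqP eb|/eqP eb] pa la; subst b.
    have [pP [p1 p2 p3]] := IH i ik (ltn_trans ik kP) a1 Si pR pa la.
    exists (i :: pP); split => //; first by rewrite /= p1 /parent E eqxx.
    by rewrite /pivot E /step_at NE /= eqxx.
  have [pP [p1 p2 p3]] := IH j jk (ltn_trans jk kP) a2 Sj pR pa la.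
  exists (j :: pP); split => //; first by rewrite /= p1 /parent E eqxx orbT.
  by rewrite /pivot E /step_at NE /= eqxx.
Qed.

Lemma node_ok_agree G (Q Q' : proof) a : (forall b, b <= a -> nth dnode Q' b = nth dnode Q b) ->
  node_ok G Q a -> node_ok G Q' a.
Proof.
move=> H; rewrite /node_ok /step_at /cl_at (H a (leqnn a)).
case: (nstep _) => // i j z [ik jk ij zz Ck]; rewrite (H i) ?(H j) //; try lia.
Qed.

Lemma path_agree G (Q Q' : proof) m : (forall b, b <= m -> nth dnode Q' b = nth dnode Q b) ->
  (forall b, b <= m -> node_ok G Q b) ->
  forall s p, s <= m -> path (parent Q') s p -> path (parent Q) s p && all (fun b => b <= m) p.
Proof.
move=> H ok s p; elim: p s => [|b p IH] s sm //= /andP[psb pb].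
have e : parent Q' s b = parent Q s b by rewrite /parent /step_at (H s sm).
rewrite e in psb *; rewrite psb /=.
have bs : b < s.
  move: psb (ok s sm); rewrite /parent /node_ok; case: (step_at Q s) => // i j z.
  by case/orP => /eqP -> [].
have bm : b <= m by lia.
by rewrite bm; apply: IH.
Qed.

Lemma pivots_agree (Q Q' : proof) m p : (forall b, b <= m -> nth dnode Q' b = nth dnode Q b) ->
  all (fun b => b <= m) p -> path_pivots Q' p = path_pivots Q p.
Proof.
move=> H; elim: p => //= b p IH /andP[bm ap].
by rewrite /path_pivots /= /pivot /step_at (H b bm) -!/(path_pivots _ _) IH.
Qed.

Lemma R_exists F x y P : ~~ mentions F x -> ~~ mentions F y -> is_reg_proof (fxy x y F) P ->
  exists R, [/\ is_reg_proof F R, size R <= size (OUT x y P) &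
     forall a i j z, step_at R a = Resolve i j z -> (z != x) && (z != y)].
Proof.
move=> mx my [[Pn ok root0] reg].
have rP : Defs.root P < size P by rewrite /Defs.root; lia.
have [Hd Ha] := inv_stat x y ok rP.
case Sr: (stat x y P (Defs.root P)) => [|m].
  by move: (Hd Sr); rewrite root0 /sat2 !in_fset0.
have [mlt sub] := Ha m Sr.
have mO : m < size (OUT x y P).
  rewrite -ee_last; apply: leq_trans mlt _; apply: ee_mono; lia.
have Dm : D x y P m = fset0.
  apply/fsetP => l; rewrite in_fset0; apply/negP => /sub; by rewrite in_restr root0 in_fset0 andbF.
have oko := out_ok mx my ok.
set R := take m.+1 (OUT x y P).
have ag : forall b, b <= m -> nth dnode R b = nth dnode (OUT x y P) b.
  by move=> b bm; rewrite /R nth_take.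
have sR : size R = m.+1 by rewrite /R size_takel.
have rR : Defs.root R = m by rewrite /Defs.root sR.
have okb : forall b, b <= m -> node_ok F (OUT x y P) b.
  by move=> b bm; apply: (proj1 (oko b _)); lia.
exists R; split.
- split.
  + split; first by rewrite sR.
      move=> a; rewrite sR => am; apply: (node_ok_agree (Q := OUT x y P)).
        by move=> b ba; apply: ag; lia.
      by apply: okb; lia.
    by rewrite rR /cl_at ag // -/(cl_at _ m) -/(D x y P m) Dm.
  + move=> p; rewrite rR => pp lp.
    have /andP[pp' ap] := path_agree ag okb (leqnn m) pp.
    have lm : last m p <= m.
      have := mem_last m p; rewrite inE => /orP[/eqP->//|]; by move/(allP ap).
    have lp' : is_leaf (OUT x y P) (last m p) by move: lp; rewrite /is_leaf /step_at ag.
    have [pP [p1 p2 p3]] := claimC ok rP Sr pp' lp'.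
    have u := reg pP p1 p2.
    rewrite (pivots_agree (p := m :: p) ag) /= ?ap ?leqnn //.
    exact: subseq_uniq p3 u.
- by rewrite sR.
- move=> a i j z; case: (ltnP a m.+1) => am.
    have -> : step_at R a = step_at (OUT x y P) a by rewrite /step_at ag //; lia.
    by apply: (proj2 (oko a _)); lia.
  by rewrite /step_at nth_default // sR.
Qed.

Lemma lit_origin F P k l : (forall k, k < size P -> node_ok F P k) -> k < size P -> l \in cl_at P k ->
  exists m, [/\ m < size P, step_at P m = Leaf & l \in cl_at P m].
Proof.
move=> ok; elim/ltn_ind: k => k IH kP lk.
have := ok k kP; rewrite /node_ok.
case E: (step_at P k) => [|i j z]; first by move=> _; exists k.
case=> ik jk _ _ Ck; move: lk; rewrite Ck in_fsetU !in_fsetD1 => /orP[/andP[_ li]|/andP[_ lj]].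
- by apply: (IH i) => //; lia.
- by apply: (IH j) => //; lia.
Qed.

Lemma xres_exists F x y P : is_proof (fxy x y F) P -> x != y -> ~~ mentions F x ->
  exists2 k, k < size P & pivot P k = Some x.
Proof.
case=> Pn ok root0 xy mx.
case: (boolP (has (fun k => pivot P k == Some x) (iota 0 (size P)))) => [/hasP[k kin /eqP e]|/hasPn H].
  by exists k => //; rewrite mem_iota in kin.
have inv : forall k, k < size P -> (x,true) \in cl_at P k \/ exists v, (v,false) \in cl_at P k.
  elim/ltn_ind => k IH kP; have := ok k kP; rewrite /node_ok.
  case E: (step_at P k) => [|i j z].
    case/in_fxy=> [->|->|[d dF ->]]; first by left; rewrite in_fset1.
      by right; exists x; rewrite in_fset2 eqxx.
    by right; exists y; rewrite in_fset1U eqxx.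
  case=> ik jk _ _ Ck.
  have zx : z != x.
    have := H k; rewrite mem_iota /= kP /pivot E => /(_ isT).
    by apply: contra => /eqP->.
  have [|[v hv]] := IH i ik (ltn_trans ik kP).
    by move=> hx; left; rewrite Ck in_fsetU in_fsetD1 hx xpair_eqE (eq_sym x z) (negbTE zx).
  by right; exists v; rewrite Ck in_fsetU in_fsetD1 hv xpair_eqE andbF.
have rP : Defs.root P < size P by rewrite /Defs.root; lia.
by case: (inv _ rP); rewrite root0 ?in_fset0 // => -[v]; rewrite in_fset0.
Qed.

Lemma yres_exists F x y P : is_proof (fxy x y F) P -> x != y ->
  exists2 k, k < size P & pivot P k = Some y.
Proof.
case=> Pn ok root0 xy.
case: (boolP (has (fun k => pivot P k == Some y) (iota 0 (size P)))) => [/hasP[k kin /eqP e]|/hasPn H].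
  by exists k => //; rewrite mem_iota in kin.
have inv : forall k, k < size P ->
   [\/ (y,true) \in cl_at P k, (y,false) \in cl_at P k | cl_at P k = [fset (x,true)]].
  elim/ltn_ind => k IH kP; have := ok k kP; rewrite /node_ok.
  case E: (step_at P k) => [|i j z].
    case/in_fxy=> [->|->|[d dF ->]]; first by constructor 3.
      by constructor 1; rewrite in_fset2 eqxx orbT.
    by constructor 2; rewrite in_fset1U eqxx.
  case=> ik jk _ [zi zj] Ck.
  have zy : z != y.
    have := H k; rewrite mem_iota /= kP /pivot E => /(_ isT).
    by apply: contra => /eqP->.
  have Hn b : (y, b) != (z, true) /\ (y, b) != (z, false).
    by rewrite !xpair_eqE (eq_sym y z) (negbTE zy).
  have [hi|hi|ci] := IH i ik (ltn_trans ik kP).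
  - by constructor 1; rewrite Ck in_fsetU in_fsetD1 hi (proj1 (Hn true)).
  - by constructor 2; rewrite Ck in_fsetU in_fsetD1 hi (proj1 (Hn false)).
  have [hj|hj|cj] := IH j jk (ltn_trans jk kP).
  - by constructor 1; rewrite Ck in_fsetU !in_fsetD1 hj (proj2 (Hn true)) orbT.
  - by constructor 2; rewrite Ck in_fsetU !in_fsetD1 hj (proj2 (Hn false)) orbT.
  by move: zj; rewrite cj in_fset1 xpair_eqE andbF.
have rP : Defs.root P < size P by rewrite /Defs.root; lia.
case: (inv _ rP); rewrite root0 ?in_fset0 //.
by move/fsetP => /(_ (x,true)); rewrite in_fset0 in_fset1 eqxx.
Qed.


Definition bad x y P k :=
  (pivot P k == Some x) || (pivot P k == Some y) || (is_leaf P k && sat2 x y (cl_at P k)).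

Lemma noemit x y P k : k < size P -> bad x y P k -> (stepR x y P k).2 = None.
Proof.
move=> kP; rewrite /bad; case: (specP x y kP) => //.
- by move=> E ns; rewrite /pivot /is_leaf E (negbTE ns).
- move=> i j z a1 a2 E _ _ zxy _ _ _ _ _ _ _; rewrite /pivot /is_leaf E /= ?andbF ?orbF.
  move: zxy; rewrite negb_or => /andP[nx ny] /orP[/eqP [ez]|/eqP [ez]];
    by rewrite ez eqxx in nx ny.
Qed.

Lemma ee_count x y P k : k <= size P -> ee x y P k + count (bad x y P) (iota 0 k) <= k.
Proof.
elim: k => [|k IH] kP; first by rewrite /ee.
have kP' : k < size P by [].
have [_ _ Es] := @go_step x y P k kP'.
rewrite Es -addn1 iotaD count_cat /= add0n.
have := IH (ltnW kP'); case B: (bad x y P k).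
  by rewrite (noemit kP' B) /=; lia.
by case: (stepR x y P k).2 => [nd|] /=; lia.
Qed.

Lemma count_disj (a b : pred nat) s : (forall k, k \in s -> ~~ (a k && b k)) ->
  count (fun k => a k || b k) s = count a s + count b s.
Proof.
elim: s => //= c s IH H.
rewrite IH; last by move=> k ks; apply: H; rewrite inE ks orbT.
have := H c; rewrite inE eqxx => /(_ isT).
by case: (a c); case: (b c) => //= _; lia.
Qed.

Lemma count_bad F x y P : is_proof (fxy x y F) P -> x != y -> ~~ mentions F x -> ~~ mentions F y ->
  nres_on P x + nres_on P y + 2 <= count (bad x y P) (iota 0 (size P)).
Proof.
move=> pr xy mx my; have [Pn ok r0] := pr.
rewrite /bad count_disj; last first.
  move=> k _; rewrite /is_leaf /pivot; case: (step_at P k) => //= *; by rewrite andbF.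
rewrite count_disj; last first.
  move=> k _; case: (pivot P k) => //= z; apply/negP => /andP[/eqP [->] /eqP [e]].
  by move: xy; rewrite e eqxx.
rewrite /nres_on -!addnA leq_add2l leq_add2l.
(* two distinct satisfied leaves *)
have [k1 k1P p1] := xres_exists pr xy mx.
have [k2 k2P p2] := yres_exists pr xy.
have lit (k : nat) v : k < size P -> pivot P k = Some v ->
   exists m, [/\ m < size P, step_at P m = Leaf & (v,true) \in cl_at P m].
  move=> kP; rewrite /pivot; have := ok k kP; rewrite /node_ok.
  case: (step_at P k) => // i j z [ik _ _ [zi _] _] [<-].
  by apply: (lit_origin ok) zi; lia.
have [mx' [mxP mxL mxi]] := lit k1 x k1P p1.
have [my' [myP myL myi]] := lit k2 y k2P p2.
have neq : mx' != my'.
  apply/negP => /eqP e; subst my'.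
  have := ok mx' mxP; rewrite /node_ok mxL => /in_fxy [E|E|[d dF E]]; move: mxi myi; rewrite E.
  - by rewrite !in_fset1 !xpair_eqE /= !andbT => _ /eqP e; move: xy; rewrite e eqxx.
  - by rewrite !in_fset2 !xpair_eqE /= !andbT !andbF /= => /eqP e; move: xy; rewrite e eqxx.
  - rewrite !in_fset1U !xpair_eqE /= !andbF /= => /(mentionsP dF); by rewrite (negbTE mx).
rewrite -size_filter.
have -> : 2 = size [:: mx'; my'] by [].
apply: uniq_leq_size; first by rewrite /= inE neq.
move=> k; rewrite !inE mem_filter mem_iota /= add0n => /orP[/eqP->|/eqP->].
  by rewrite /is_leaf mxL /sat2 mxi mxP.
by rewrite /is_leaf myL /sat2 myi orbT myP.
Qed.

Definition lift y (nd : node) : node :=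
  Node ((y,false) |` ncl nd)
       (match nstep nd with Leaf => Leaf | Resolve i j z => Resolve i.+3 j.+3 z end).

Definition mkQ x y (R : proof) : proof :=
  [:: Node [fset (x,true)] Leaf; Node [fset (x,false); (y,true)] Leaf;
      Node [fset (y,true)] (Resolve 0 1 x)] ++ map (lift y) R ++
  [:: Node fset0 (Resolve 2 (size R).+2 y)].

Lemma size_mkQ x y R : size (mkQ x y R) = (size R).+4.
Proof. by rewrite /mkQ /= size_cat size_map /= addn1. Qed.

Lemma nth_mkQ x y R a : a < size R -> nth dnode (mkQ x y R) a.+3 = lift y (nth dnode R a).
Proof. by move=> aR; rewrite /mkQ /= nth_cat size_map aR (nth_map dnode). Qed.

Lemma nth_mkQ_last x y R : nth dnode (mkQ x y R) (size R).+3 = Node fset0 (Resolve 2 (size R).+2 y).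
Proof. by rewrite /mkQ /= nth_cat size_map ltnn subnn. Qed.

Lemma lift_res y z (Ca Ci Cj : clause) : z != y ->
  Ca = (Ci `\ (z,true)) `|` (Cj `\ (z,false)) ->
  (y,false) |` Ca = (((y,false) |` Ci) `\ (z,true)) `|` (((y,false) |` Cj) `\ (z,false)).
Proof.
move=> zy ->; apply/fsetP => l; rewrite !(in_fset1U, in_fsetU, in_fsetD1).
case: (eqVneq l (y,false)) => [->|ny] /=; last by [].
by rewrite !xpair_eqE /= andbF eq_sym (negbTE zy).
Qed.

Lemma pivot_mkQ x y R a : a < size R -> pivot (mkQ x y R) a.+3 = pivot R a.
Proof. by move=> aR; rewrite /pivot /step_at nth_mkQ // /lift /=; case: (nstep _). Qed.

Lemma leaf_mkQ x y R a : a < size R -> is_leaf (mkQ x y R) a.+3 = is_leaf R a.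
Proof. by move=> aR; rewrite /is_leaf /step_at nth_mkQ // /lift /=; case: (nstep _). Qed.

Lemma shiftpath F x y (R : proof) : (forall a, a < size R -> node_ok F R a) ->
  forall p a, a < size R -> path (parent (mkQ x y R)) a.+3 p ->
  exists2 pR, p = map (addn 3) pR & path (parent R) a pR && all (fun b => b < size R) pR.
Proof.
move=> ok; elim=> [|b p IH] a aR; first by move=> _; exists [::].
have okA := ok a aR; rewrite /node_ok /step_at in okA.
move=> /andP[]; rewrite {1}/parent /step_at nth_mkQ // /lift /=.
case E: (nstep (nth dnode R a)) okA => // [i j z] [ia ja _ _ _] /orP[/eqP eb|/eqP eb] pb; subst b.
- have iR : i < size R by lia.
  have [pR -> /andP[h1 h2]] := IH i iR pb.
  exists (i :: pR) => //; by rewrite /= h1 h2 iR /parent /step_at E eqxx.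
- have jR : j < size R by lia.
  have [pR -> /andP[h1 h2]] := IH j jR pb.
  exists (j :: pR) => //; by rewrite /= h1 h2 jR /parent /step_at E eqxx orbT.
Qed.

Lemma pivots_shift x y R pR : all (fun b => b < size R) pR ->
  path_pivots (mkQ x y R) (map (addn 3) pR) = path_pivots R pR.
Proof.
elim: pR => //= b pR IH /andP[bR aR].
rewrite /path_pivots /= -!/(path_pivots _ _) IH // add3n pivot_mkQ //.
Qed.

Lemma Q0_exists F x y R : x != y -> is_reg_proof F R ->
  (forall a i j z, step_at R a = Resolve i j z -> (z != x) && (z != y)) ->
  [/\ is_reg_proof (fxy x y F) (mkQ x y R), nres_on (mkQ x y R) x = 1 &
   forall k i j, k < size (mkQ x y R) -> step_at (mkQ x y R) k = Resolve i j x ->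
     [/\ step_at (mkQ x y R) i = Leaf, cl_at (mkQ x y R) i = [fset (x,true)],
         step_at (mkQ x y R) j = Leaf & cl_at (mkQ x y R) j = [fset (x,false); (y,true)]]].
Proof.
move=> xy [[Rn okR rR] regR] piv.
have sQ : size (mkQ x y R) = (size R).+4 := size_mkQ x y R.
have yx : y != x by rewrite eq_sym.
have pivR : forall a v, pivot R a = Some v -> (v != x) && (v != y).
  by move=> a v; rewrite /pivot; case E: (step_at R a) => // [i j z] [<-]; apply: piv E.
have pivQ : forall k, k < size (mkQ x y R) -> (pivot (mkQ x y R) k == Some x) = (k == 2).
  move=> k; rewrite sQ; case: k => [|[|[|a]]] //= aR.
  - by rewrite /pivot /step_at /mkQ /= !eqxx.
  case: (ltnP a (size R)) => aR'.
    rewrite pivot_mkQ //; case E: (pivot R a) => [v|] //.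
    have := pivR a v E; case/andP => vx _; apply/negbTE; apply: contra vx => /eqP [->] //.
  have -> : a = size R by lia.
  rewrite /pivot /step_at nth_mkQ_last /=; apply/negbTE; apply: contra yx => /eqP [->] //.
have okQ : forall k, k < size (mkQ x y R) -> node_ok (fxy x y F) (mkQ x y R) k.
  move=> k; rewrite sQ; case: k => [|[|[|a]]] // kR; rewrite /node_ok /step_at /cl_at.
  * by rewrite /mkQ /= in_cons eqxx.
  * by rewrite /mkQ /= !in_cons eqxx orbT.
  * rewrite /mkQ /=; split => //; first by rewrite in_fset1 eqxx in_fset2 eqxx.
    apply/fsetP => l; rewrite !(in_fsetU, in_fsetD1, in_fset1, in_fset2, in_fset0).
    case: (eqVneq l (y,true)) => [->|ny]; first by rewrite !xpair_eqE /= (negbTE yx) orbT.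
    by case: (eqVneq l (x,false)); case: (eqVneq l (x, true)).
  case: (ltnP a (size R)) => aR.
    rewrite nth_mkQ // /lift /=.
    have := okR a aR; rewrite /node_ok /step_at /cl_at.
    case E: (nstep (nth dnode R a)) => [|i j z].
      move=> dF; rewrite /fxy !in_cons; apply/orP; right; apply/orP; right.
      by apply/mapP; exists (ncl (nth dnode R a)).
    case=> ia ja ij [zi zj] Ca; rewrite !nth_mkQ /lift /=; try lia.
    split; try lia; first by rewrite !in_fset1U zi zj !orbT.
    apply: lift_res Ca.
    by have := piv a i j z; rewrite /step_at E => /(_ erefl) /andP[].
  have -> : a = size R by lia.
  have n2 : nth dnode (mkQ x y R) 2 = Node [fset (y,true)] (Resolve 0 1 x) by [].
  have rootR : (Defs.root R).+3 = (size R).+2 by rewrite /Defs.root; lia.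
  have nr : nth dnode (mkQ x y R) (size R).+2 = lift y (nth dnode R (Defs.root R)).
    by rewrite -rootR nth_mkQ // /Defs.root; lia.
  rewrite nth_mkQ_last; cbn [nstep ncl]; rewrite n2 nr /lift /cl_at in rR *; cbn [nstep ncl]; rewrite rR.
  split; try lia; first by rewrite in_fset1 in_fset1U !eqxx.
  apply/fsetP => l; rewrite !(in_fsetU, in_fsetD1, in_fset1, in_fset1U, in_fset0).
  by case: (eqVneq l (y,true)); case: (eqVneq l (y,false)).
have rQ : Defs.root (mkQ x y R) = (size R).+3 by rewrite /Defs.root sQ.
have pr : pivot (mkQ x y R) (size R).+3 = Some y by rewrite /pivot /step_at nth_mkQ_last.
split.
- split; first split; [by rewrite sQ| exact: okQ | by rewrite rQ /cl_at nth_mkQ_last|].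
  move=> p; rewrite rQ => pp lp.
  have rootR : (Defs.root R).+3 = (size R).+2 by rewrite /Defs.root; lia.
  have rRs : Defs.root R < size R by rewrite /Defs.root; lia.
  have ny : forall s, y \notin path_pivots R s.
    move=> s; rewrite /path_pivots mem_pmap; apply/mapP => -[a _ /esym].
    by move/pivR => /andP[_]; rewrite eqxx.
  case: p pp lp => [|b p] pp lp.
    by move: lp; rewrite /is_leaf /step_at nth_mkQ_last.
  move: pp => /andP[]; rewrite {1}/parent /step_at nth_mkQ_last; cbn [nstep].
  rewrite pp_cons pr cons_uniq => /orP[/eqP eb|/eqP eb] pb; subst b.
  + case: p pb lp => [|c p] pb lp.
      by move: lp; rewrite /is_leaf /step_at /=.
    move: pb => /andP[]; rewrite {1}/parent /step_at /= => /orP[/eqP ec|/eqP ec] pc; subst c.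
      case: p pc lp => [|d p] pc lp; last by move: pc => /andP[]; rewrite /parent /step_at /=.
      by rewrite /path_pivots /pivot /step_at /= !inE yx.
    case: p pc lp => [|d p] pc lp; last by move: pc => /andP[]; rewrite /parent /step_at /=.
    by rewrite /path_pivots /pivot /step_at /= !inE yx.
  rewrite -rootR in pb *.
  have [pR ep /andP[pR1 pR2]] := @shiftpath F x y R okR p (Defs.root R) rRs pb.
  subst p.
  have ep' : (Defs.root R).+3 :: map (addn 3) pR = map (addn 3) (Defs.root R :: pR) by [].
  rewrite ep' pivots_shift; last by rewrite /= rRs pR2.
  have lr : last (Defs.root R) pR < size R.
    have := mem_last (Defs.root R) pR; rewrite inE => /orP[/eqP->//|]; by move/(allP pR2).
  have lR : is_leaf R (last (Defs.root R) pR).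
    by move: lp; rewrite /= -rootR -add3n last_map add3n leaf_mkQ.
  by rewrite ny /=; apply: regR.
- rewrite /nres_on (@eq_in_count _ _ (pred1 2)); last first.
    by move=> k; rewrite mem_iota add0n => /andP[_ kQ]; rewrite /= pivQ.
  by rewrite count_uniq_mem ?iota_uniq // mem_iota sQ.
- move=> k i j kQ E.
  have := pivQ k kQ; rewrite /pivot E eqxx => /esym/eqP ek; subst k.
  move: E; rewrite /step_at /= => -[<- <-].
  by rewrite /step_at /cl_at.
Qed.

Local Open Scope fset_scope.

Theorem lemma8 (F : cnf) (x y : nat) :
  x != y -> ~~ mentions F x -> ~~ mentions F y -> unsatisfiable F ->
  forall P : proof, is_min_reg_proof (fxy x y F) P ->
    nres_on P x = 1 /\
    exists Q : proof,
      [/\ is_reg_proof (fxy x y F) Q, size Q = size P, nres_on Q x = 1 &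
          forall k i j, k < size Q -> step_at Q k = Resolve i j x ->
            [/\ step_at Q i = Leaf, cl_at Q i = [fset (x, true)],
                step_at Q j = Leaf & cl_at Q j = [fset (x, false); (y, true)]]].
Proof.
move=> xy mx my _ P [Preg Pmin].
have [R [Rreg RO Rpiv]] := R_exists mx my Preg.
have [Qreg Qx Qfin] := Q0_exists xy Rreg Rpiv.
have sQ := size_mkQ x y R.
have le1 := Pmin _ Qreg.
have cb := count_bad (proj1 Preg) xy mx my.
have ec := @ee_count x y P (size P) (leqnn _).
rewrite ee_last in ec.
have [k1 k1P p1] := xres_exists (proj1 Preg) xy mx.
have [k2 k2P p2] := yres_exists (proj1 Preg) xy.
have nx1 : (0 < nres_on P x)%N.
  by rewrite /nres_on -has_count; apply/hasP; exists k1; rewrite ?mem_iota ?p1.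
have ny1 : (0 < nres_on P y)%N.
  by rewrite /nres_on -has_count; apply/hasP; exists k2; rewrite ?mem_iota ?p2.
have nx : nres_on P x = 1%N by lia.
split => //.
by exists (mkQ x y R); split => //; lia.
Qed.
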